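(* Let $\Gamma$ be a connected connected-homogeneous locally-finite bipartite graph with bipartition $X\cup Y$. If $\Gamma$ is not a tree and has at least one vertex of degree greater than $2$, then $\Gamma$ embeds the $4$-cycle $C_4$ as an induced subgraph.
   Context: A bipartite graph with given bipartition $X\cup Y$ is a connected-homogeneous bipartite graph if every isomorphism between finite connected induced subgraphs mapping vertices of $X$ to vertices of $X$ and vertices of $Y$ to vertices of $Y$ extends to an automorphism of the graph preserving $X$ and $Y$ setwise. Locally-finite: every vertex has finite degree. *)

(* Defs.v *)
From Stdlib Require Import List.
Import ListNotations.

Section Graphs.
Context {V : Type} (adj : V -> V -> Prop).

Definition simple_graph : Prop :=
  (forall x y, adj x y -> adj y x) /\ (forall x, ~ adj x x).

(* bipartite with given bipartition: X = {v | side v = true}, Y = {v | side v = false} *)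
Definition bipartite_wrt (side : V -> bool) : Prop :=
  forall x y, adj x y -> side x <> side y.

Inductive walk_in (P : V -> Prop) : V -> V -> Prop :=
| walk_refl x : P x -> walk_in P x x
| walk_step x z y : P x -> adj x z -> walk_in P z y -> walk_in P x y.

Definition connected : Prop := forall x y, walk_in (fun _ => True) x y.

Definition locally_finite : Prop :=
  forall v, exists l : list V, forall w, adj v w -> In w l.

Fixpoint chain (l : list V) : Prop :=
  match l with
  | x :: ((y :: _) as t) => adj x y /\ chain t
  | _ => True
  end.

Definition is_cycle (l : list V) : Prop :=
  match l with
  | [] => False
  | x :: _ => NoDup l /\ 3 <= length l /\ chain l /\ adj (last l x) x
  end.

Definition is_tree : Prop := connected /\ ~ (exists l, is_cycle l).

Definition has_vertex_deg_gt2 : Prop :=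
  exists v a b c, adj v a /\ adj v b /\ adj v c /\ a <> b /\ a <> c /\ b <> c.

Definition induced_connected (A : list V) : Prop :=
  forall x y, In x A -> In y A -> walk_in (fun z => In z A) x y.

Definition part_iso (side : V -> bool) (A B : list V) (f : V -> V) : Prop :=
  (forall x, In x A -> In (f x) B) /\
  (forall x y, In x A -> In y A -> f x = f y -> x = y) /\
  (forall y, In y B -> exists x, In x A /\ f x = y) /\
  (forall x y, In x A -> In y A -> (adj x y <-> adj (f x) (f y))) /\
  (forall x, In x A -> side (f x) = side x).

Definition bip_automorphism (side : V -> bool) (g : V -> V) : Prop :=
  (exists h : V -> V, (forall x, h (g x) = x) /\ (forall y, g (h y) = y)) /\
  (forall x y, adj x y <-> adj (g x) (g y)) /\
  (forall x, side (g x) = side x).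

Definition connected_homogeneous_bip (side : V -> bool) : Prop :=
  forall (A B : list V) (f : V -> V),
    induced_connected A -> induced_connected B -> part_iso side A B f ->
    exists g, bip_automorphism side g /\ (forall x, In x A -> g x = f x).

Definition embeds_induced_C4 : Prop :=
  exists a b c d : V,
    a <> b /\ a <> c /\ a <> d /\ b <> c /\ b <> d /\ c <> d /\
    adj a b /\ adj b c /\ adj c d /\ adj d a /\ ~ adj a c /\ ~ adj b d.

End Graphs.

(* Main.v *)
Require Import Defs.
From Stdlib Require Import List Lia Arith Classical ClassicalEpsilon.
Import ListNotations.

Section Main.
Variable V : Type.
Variable adj : V -> V -> Prop.
Variable side : V -> bool.
Hypothesis Hsg : simple_graph adj.
Hypothesis Hbip : bipartite_wrt adj side.
Hypothesis Hch : connected_homogeneous_bip adj side.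

Lemma adj_sym x y : adj x y -> adj y x. Proof. apply (proj1 Hsg). Qed.
Lemma adj_irr x : ~ adj x x. Proof. apply (proj2 Hsg). Qed.
Lemma adj_neq x y : adj x y -> x <> y.
Proof. intros H E; subst; eapply adj_irr; eauto. Qed.
Lemma adj_side x y : adj x y -> side y = negb (side x).
Proof. intros H; pose proof (Hbip _ _ H). destruct (side x), (side y); simpl; congruence. Qed.
Lemma same_side_nadj x y : side x = side y -> ~ adj x y.
Proof. intros E H; apply (Hbip _ _ H); auto. Qed.

Lemma walk_mono (P Q : V -> Prop) x y : (forall z, P z -> Q z) -> walk_in adj P x y -> walk_in adj Q x y.
Proof. intros HPQ W; induction W; [apply walk_refl; auto | eapply walk_step; eauto]. Qed.

Lemma walk_snoc P x y z : walk_in adj P x y -> adj y z -> P z -> walk_in adj P x z.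
Proof. intros W; induction W; intros.
 - eapply walk_step; eauto. apply walk_refl; auto.
 - eapply walk_step; eauto. Qed.

Lemma ic_single x : induced_connected adj [x].
Proof. intros a b [<-|[]] [<-|[]]. apply walk_refl; simpl; auto. Qed.

Lemma ic_cons x y A : induced_connected adj A -> In y A -> adj x y -> induced_connected adj (x :: A).
Proof.
  intros IC Hy Hxy a b Ha Hb.
  assert (Hw: forall c d, In c A -> In d A -> walk_in adj (fun z => In z (x::A)) c d).
  { intros c d Hc Hd. eapply walk_mono; [|apply IC; eauto]. intros; simpl; auto. }
  destruct Ha as [<-|Ha]; destruct Hb as [<-|Hb].
  - apply walk_refl; simpl; auto.
  - eapply walk_step; [simpl; auto | exact Hxy | apply Hw; auto].
  - eapply walk_snoc; [apply (Hw a y); auto | apply adj_sym; auto | simpl; auto].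
  - apply Hw; auto.
Qed.

Definition swapf (a b : V) : V -> V :=
  fun v => if excluded_middle_informative (v = a) then b else v.

Lemma swap_ext a b T :
  ~ In a T -> ~ In b T -> side a = side b ->
  (forall t, In t T -> (adj a t <-> adj b t)) ->
  induced_connected adj (a :: T) -> induced_connected adj (b :: T) ->
  exists g, bip_automorphism adj side g /\ g a = b /\ forall t, In t T -> g t = t.
Proof.
  intros Ha Hb Hs Hadj ICA ICB.
  assert (Sa: swapf a b a = b) by (unfold swapf; destruct (excluded_middle_informative (a = a)); congruence).
  assert (St: forall t, In t T -> swapf a b t = t).
  { intros t Ht; unfold swapf; destruct (excluded_middle_informative (t = a)); subst; tauto. }
  destruct (Hch (a::T) (b::T) (swapf a b) ICA ICB) as [g [Hg Hgf]].
  - split; [|split; [|split; [|split]]].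
    + intros x [<-|Hx]; [rewrite Sa; left; auto | rewrite St; auto; right; auto].
    + intros x y [<-|Hx] [<-|Hy]; intros E.
      * reflexivity.
      * rewrite Sa, (St y Hy) in E; subst; contradiction.
      * rewrite Sa, (St x Hx) in E; subst; contradiction.
      * rewrite (St x Hx), (St y Hy) in E; auto.
    + intros y [<-|Hy]; [exists a; split; [left; auto| auto] | exists y; split; [right; auto| auto]].
    + intros x y [<-|Hx] [<-|Hy].
      * rewrite Sa; split; intros H; exfalso; eapply adj_irr; eauto.
      * rewrite Sa, (St y Hy). apply Hadj; auto.
      * rewrite Sa, (St x Hx). split; intros H; apply adj_sym;
          [apply (proj1 (Hadj x Hx)) | apply (proj2 (Hadj x Hx))]; apply adj_sym; auto.
      * rewrite (St x Hx), (St y Hy); tauto.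
    + intros x [<-|Hx]; [rewrite Sa; auto | rewrite St; auto].
  - exists g; split; auto. split.
    + rewrite Hgf; [apply Sa| left; auto].
    + intros t Ht; rewrite Hgf; [apply St; auto| right; auto].
Qed.

Lemma aut_adj g x y : bip_automorphism adj side g -> adj x y -> adj (g x) (g y).
Proof. intros [_ [H _]] A; apply (proj1 (H x y)); auto. Qed.
Lemma aut_inj g x y : bip_automorphism adj side g -> g x = g y -> x = y.
Proof. intros [[h [H1 _]] _] E. rewrite <- (H1 x), <- (H1 y), E; auto. Qed.

Definition deg3 v := exists a b c, adj v a /\ adj v b /\ adj v c /\ a <> b /\ a <> c /\ b <> c.

Lemma deg3_move v v' : side v = side v' -> deg3 v -> deg3 v'.
Proof.
  intros Hs (a&b&c&Ha&Hb&Hc&Hab&Hac&Hbc).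
  destruct (swap_ext v v' [] ltac:(simpl; auto) ltac:(simpl; auto) Hs
     ltac:(intros t []) (ic_single _) (ic_single _)) as [g [Hg [Hgv _]]].
  exists (g a), (g b), (g c). rewrite <- Hgv.
  repeat split; try (apply aut_adj; auto); intros E; apply aut_inj in E; auto.
Qed.

Lemma deg3_avoid v p q : deg3 v -> exists z, adj v z /\ z <> p /\ z <> q.
Proof.
  intros (a&b&c&Ha&Hb&Hc&Hab&Hac&Hbc).
  destruct (classic (a <> p /\ a <> q)) as [H|H]; [exists a; tauto|].
  destruct (classic (b <> p /\ b <> q)) as [H'|H']; [exists b; tauto|].
  exists c; split; auto. apply not_and_or in H; apply not_and_or in H'.
  destruct H as [H|H]; destruct H' as [H'|H']; apply NNPP in H; apply NNPP in H'; subst; split; congruence.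
Qed.

Definition cyc (f : nat -> V) (n : nat) : Prop :=
  3 <= n /\ (forall i j, i < n -> j < n -> f i = f j -> i = j) /\
  (forall i, S i < n -> adj (f i) (f (S i))) /\ adj (f (n-1)) (f 0).

Lemma chain_nth d l : chain adj l -> forall i, S i < length l -> adj (nth i l d) (nth (S i) l d).
Proof.
  induction l as [|a t IH]; intros Hc i Hi; simpl in Hi; [lia|].
  destruct t as [|b t']; simpl in Hi; [lia|].
  destruct Hc as [Hab Hc].
  destruct i; simpl; auto.
  apply (IH Hc i). simpl; lia.
Qed.

Lemma last_nth (l : list V) d : l <> [] -> last l d = nth (length l - 1) l d.
Proof.
  induction l as [|a t IH]; intros H; [congruence|].
  destruct t as [|b t']; [reflexivity|].
  transitivity (last (b :: t') d); [reflexivity|].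
  rewrite IH by congruence. simpl. rewrite !Nat.sub_0_r. reflexivity.
Qed.

Lemma cycle_to_cyc l : is_cycle adj l -> exists f n, cyc f n.
Proof.
  destruct l as [|x t]; simpl; [tauto|].
  intros [Hnd [Hlen [Hc Hl]]].
  exists (fun i => nth i (x :: t) x), (length (x :: t)).
  repeat split.
  - simpl; lia.
  - apply NoDup_nth; auto.
  - apply chain_nth; auto.
  - rewrite <- last_nth; [auto|congruence].
Qed.

Lemma min_nat (P : nat -> Prop) n : P n -> exists m, P m /\ forall k, k < m -> ~ P k.
Proof.
  induction n as [n IH] using lt_wf_ind. intros Hn.
  destruct (classic (exists k, k < n /\ P k)) as [[k [Hk Pk]]|H].
  - apply (IH k Hk Pk).
  - exists n; split; auto. intros k Hk Pk; apply H; eauto.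
Qed.

Lemma cyc_sub f n i j : cyc f n -> i < j -> j < n -> adj (f i) (f j) -> 2 <= j - i ->
  cyc (fun t => f (i + t)) (j - i + 1).
Proof.
  intros [H3 [Hinj [Hc Hl]]] Hij Hj Ha H2. repeat split.
  - lia.
  - intros a b Ha' Hb' E. apply Hinj in E; lia.
  - intros a Ha'. replace (i + S a) with (S (i + a)) by lia. apply Hc; lia.
  - replace (i + (j - i + 1 - 1)) with j by lia. rewrite Nat.add_0_r. apply adj_sym; auto.
Qed.

Lemma cyc_pre f n w j : cyc f n -> adj w (f 0) -> adj w (f j) -> 2 <= j -> j < n ->
  (forall k, k < n -> w <> f k) ->
  cyc (fun t => match t with 0 => w | S t' => f t' end) (j + 2).
Proof.
  intros [H3 [Hinj [Hc Hl]]] Hw0 Hwj H2 Hj Hoff. repeat split.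
  - lia.
  - intros [|a] [|b] Ha Hb E; auto.
    + exfalso; apply (Hoff b); auto; lia.
    + exfalso; apply (Hoff a); auto; lia.
    + f_equal; apply Hinj; auto; lia.
  - intros [|a] Ha; auto. apply Hc; lia.
  - replace (j + 2 - 1) with (S j) by lia. apply adj_sym; auto.
Qed.

Lemma cyc_rot f n : cyc f n -> cyc (fun t => if Nat.ltb t (n-1) then f (S t) else f 0) n.
Proof.
  intros [H3 [Hinj [Hc Hl]]]. repeat split.
  - lia.
  - intros a b Ha Hb.
    destruct (Nat.ltb_spec a (n-1)); destruct (Nat.ltb_spec b (n-1)); intros E;
      apply Hinj in E; lia.
  - intros a Ha. destruct (Nat.ltb_spec a (n-1)); [|lia].
    destruct (Nat.ltb_spec (S a) (n-1)).
    + apply Hc; lia.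
    + replace (S a) with (n-1) by lia. auto.
  - destruct (Nat.ltb_spec (n-1) (n-1)); [lia|]. destruct (Nat.ltb_spec 0 (n-1)); [|lia].
    apply Hc; lia.
Qed.

Lemma cyc6 a b c d e k : adj a b -> adj b c -> adj c d -> adj d e -> adj e k -> adj k a ->
  a <> b -> a <> c -> a <> d -> a <> e -> a <> k -> b <> c -> b <> d -> b <> e -> b <> k ->
  c <> d -> c <> e -> c <> k -> d <> e -> d <> k -> e <> k ->
  cyc (fun t => nth t [a;b;c;d;e;k] a) 6.
Proof.
  intros. repeat split.
  - lia.
  - intros t t' Ht Ht' E.
    destruct t as [|[|[|[|[|[|t]]]]]]; try lia;
    destruct t' as [|[|[|[|[|[|t']]]]]]; try lia; simpl in E; congruence.
  - intros t Ht. destruct t as [|[|[|[|[|t]]]]]; simpl; auto; lia.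
  - simpl; auto.
Qed.

Hypothesis H4 : forall a b c d, adj a b -> adj b c -> adj c d -> adj d a -> a <> c -> b <> d -> False.

Ltac sm0 Hc' Hc Hoff Hne := first [assumption | apply adj_sym; assumption | apply Hc'; lia | apply adj_sym, Hc'; lia
  | apply Hc; lia | apply adj_sym, Hc; lia
  | apply Hoff; lia | apply not_eq_sym, Hoff; lia | apply Hne; lia | apply not_eq_sym; assumption].

Lemma main_arg f n : cyc f n -> (forall k, k < n -> forall g, ~ cyc g k) -> deg3 (f 0) -> False.
Proof.
  intros Hcyc Hmin Hdeg.
  pose proof Hcyc as [H3 [Hinj [Hc Hl]]].
  assert (Hc' : forall i j, j = S i -> j < n -> adj (f i) (f j)) by (intros; subst; auto).
  assert (Hne : forall i j, i < n -> j < n -> i <> j -> f i <> f j)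
    by (intros i j Hi Hj Hij E; apply Hinj in E; auto).
  assert (ind : forall i j, i < j -> j < n -> adj (f i) (f j) -> j = S i \/ (i = 0 /\ j = n - 1)).
  { intros i j Hij Hj Ha.
    destruct (classic (j = S i \/ (i = 0 /\ j = n - 1))) as [|Hn]; auto; exfalso.
    apply (Hmin (j - i + 1) ltac:(lia) (fun t => f (i + t))). apply (cyc_sub f n i j); auto; lia. }
  assert (Hs : forall i, S i < n -> side (f (S i)) = negb (side (f i))) by (intros; apply adj_side; auto).
  assert (Hsl : side (f 0) = negb (side (f (n-1)))) by (apply adj_side; auto).
  destruct (Nat.eq_dec n 3) as [E3|N3].
  { subst n. simpl in Hsl. rewrite (Hs 1), (Hs 0) in Hsl by lia.
    destruct (side (f 0)); discriminate. }
  destruct (Nat.eq_dec n 4) as [E4|N4].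
  { subst n. apply (H4 (f 0) (f 1) (f 2) (f 3)); auto; apply Hne; lia. }
  destruct (Nat.eq_dec n 5) as [E5|N5].
  { subst n. simpl in Hsl. rewrite (Hs 3), (Hs 2), (Hs 1), (Hs 0) in Hsl by lia.
    destruct (side (f 0)); discriminate. }
  destruct (deg3_avoid _ (f 1) (f (n-1)) Hdeg) as [w [Hw0 [Hw1 Hwl]]].
  assert (Hoff : forall k, k < n -> w <> f k).
  { intros k Hk E; subst w. destruct k as [|k]; [eapply adj_irr; eauto|].
    destruct (ind 0 (S k)) as [?|[? ?]]; auto; try lia; subst; auto. }
  assert (Hwn : forall j, 1 <= j -> j <= n - 3 -> ~ adj w (f j)).
  { intros j Hj1 Hj2 Ha. destruct (Nat.eq_dec j 1) as [->|Nj].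
    - apply (same_side_nadj w (f 1)); auto.
      rewrite (Hs 0) by lia. rewrite (adj_side _ _ Hw0). destruct (side w); auto.
    - apply (Hmin (j + 2) ltac:(lia) (fun t => match t with 0 => w | S t' => f t' end)). apply (cyc_pre f n w j); auto; try lia.
      apply adj_sym; auto. }
  assert (Hsw : side w = side (f (n-1))).
  { pose proof (adj_side _ _ Hw0). pose proof (adj_side _ _ Hl).
    destruct (side w), (side (f 0)), (side (f (n-1))); simpl in *; congruence. }
  set (T := map f (seq 0 (n-2))).
  assert (HT : forall t, In t T <-> exists k, k < n - 2 /\ t = f k).
  { intros t; unfold T; rewrite in_map_iff. split.
    - intros [k [<- Hk]]; apply in_seq in Hk; exists k; split; auto; lia.
    - intros [k [Hk ->]]; exists k; split; auto; apply in_seq; lia. }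
  assert (ICT : forall s k, (forall i, s <= i -> S i < s + S k -> adj (f i) (f (S i))) ->
               induced_connected adj (map f (seq s (S k)))).
  { intros s k; revert s; induction k as [|k IH]; intros s Ha.
    - apply ic_single.
    - change (induced_connected adj (f s :: map f (seq (S s) (S k)))).
      apply (ic_cons _ (f (S s))); [apply IH; intros; apply Ha; lia| simpl; auto | apply Ha; lia]. }
  assert (ICT' : induced_connected adj T).
  { unfold T. replace (n-2) with (S (n-3)) by lia. apply ICT. intros; apply Hc; lia. }
  assert (In0 : In (f 0) T) by (apply HT; exists 0; split; auto; lia).
  destruct (swap_ext (f (n-1)) w T) as [g1 [Hg1 [Hg1a Hg1T]]].
  - intros Hi; apply HT in Hi as [k [Hk E]]. apply Hinj in E; lia.
  - intros Hi; apply HT in Hi as [k [Hk E]]. apply (Hoff k); auto; lia.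
  - auto.
  - intros t Ht; apply HT in Ht as [k [Hk ->]]. destruct k as [|k].
    + split; intros; auto. apply adj_sym; auto.
    + split; intros Ha; exfalso.
      * apply adj_sym in Ha. destruct (ind (S k) (n-1)) as [?|[? ?]]; try lia; auto.
      * apply (Hwn (S k)); auto; lia.
  - apply (ic_cons _ (f 0)); auto.
  - apply (ic_cons _ (f 0)); auto; apply adj_sym; auto.
  - set (u := g1 (f (n-2))).
    assert (Hu1 : adj u w).
    { rewrite <- Hg1a. apply aut_adj; auto. apply Hc'; lia. }
    assert (Hu2 : adj u (f (n-3))).
    { rewrite <- (Hg1T (f (n-3))) by (apply HT; exists (n-3); split; auto; lia).
      apply aut_adj; auto. apply adj_sym, Hc'; lia. }
    assert (Hw4 : ~ adj w (f (n-2))).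
    { intros Ha. apply (H4 w (f 0) (f (n-1)) (f (n-2))); sm0 Hc' Hc Hoff Hne. }
    assert (Hu3 : u <> f (n-2)) by (intros E; rewrite E in Hu1; apply Hw4, adj_sym; auto).
    destruct (Nat.eq_dec n 6) as [E6|N6].
    + (* girth 6 : spider *)
      subst n. simpl in *.
      assert (Hnot : forall i j, i < j -> j < 6 -> j <> S i -> (i = 0 -> j <> 5) -> ~ adj (f i) (f j)).
      { intros i j Hij Hj N1 N2 Ha. destruct (ind i j) as [|[]]; auto; lia. }
      assert (Hu2c : u <> f 2).
      { intros E. rewrite E in Hu1. apply (H4 w (f 0) (f 1) (f 2)); sm0 Hc' Hc Hoff Hne. }
      assert (Hd3 : deg3 (f 3)).
      { exists (f 2), (f 4), u. repeat split.
        - apply adj_sym, Hc; lia.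
        - apply Hc; lia.
        - apply adj_sym; auto.
        - apply Hne; lia.
        - auto.
        - auto. }
      assert (Hs6 : forall i, i < 6 -> side (f i) = if Nat.even i then side (f 0) else negb (side (f 0))).
      { intros i Hi. destruct i as [|[|[|[|[|[|i]]]]]]; try lia; simpl; auto;
        repeat rewrite Hs by lia; destruct (side (f 0)); auto. }
      assert (Hsw' : side w = negb (side (f 0))) by (apply adj_side; auto).
      assert (Hsu : side u = side (f 0)).
      { rewrite (adj_side _ _ (adj_sym _ _ Hu1)), Hsw'. destruct (side (f 0)); auto. }
      assert (Hd3w : deg3 w).
      { apply (deg3_move (f 3)); auto. rewrite Hs6, Hsw' by lia. reflexivity. }
      destruct (deg3_avoid w (f 0) u Hd3w) as [z [Hz [Hz0 Hzu]]].
      assert (Hsz : side z = side (f 0)).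
      { rewrite (adj_side _ _ Hz), Hsw'. destruct (side (f 0)); auto. }
      destruct (swap_ext u z [w; f 4; f 5; f 2; f 1; f 0]) as [g3 [Hg3 [Hg3u Hg3T]]].
      * intros [E|[E|[E|[E|[E|[E|[]]]]]]].
        -- apply (adj_neq u w); auto.
        -- auto.
        -- rewrite <- E in Hu2. apply (Hnot 3 5); auto; try lia. apply adj_sym; auto.
        -- auto.
        -- rewrite <- E in Hu2. apply (Hnot 1 3); auto; lia.
        -- rewrite <- E in Hu2. apply (Hnot 0 3); auto; lia.
      * intros [E|[E|[E|[E|[E|[E|[]]]]]]].
        -- apply (adj_neq w z); auto.
        -- rewrite <- E in Hz; auto.
        -- rewrite <- E in Hz. apply (same_side_nadj w (f 5)); auto.
        -- rewrite <- E in Hz. apply (Hwn 2); auto; lia.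
        -- rewrite <- E in Hz. apply (Hwn 1); auto; lia.
        -- auto.
      * congruence.
      * intros t [E|[E|[E|[E|[E|[E|[]]]]]]]; subst t.
        -- split; intros; sm0 Hc' Hc Hoff Hne.
        -- split; intros Ha; exfalso; revert Ha; apply same_side_nadj; rewrite Hs6 by lia; auto.
        -- split; intros Ha; exfalso.
           ++ apply (H4 u (f 5) (f 4) (f 3)); sm0 Hc' Hc Hoff Hne.
           ++ apply (H4 z (f 5) (f 0) w); sm0 Hc' Hc Hoff Hne.
        -- split; intros Ha; exfalso; revert Ha; apply same_side_nadj; rewrite Hs6 by lia; auto.
        -- split; intros Ha; exfalso.
           ++ apply (H4 u (f 1) (f 2) (f 3)); sm0 Hc' Hc Hoff Hne.
           ++ apply (H4 z (f 1) (f 0) w); sm0 Hc' Hc Hoff Hne.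
        -- split; intros Ha; exfalso; revert Ha; apply same_side_nadj; rewrite Hs6 by lia; auto.
      * apply (ic_cons _ w); [|simpl; auto|auto].
        apply (ic_cons _ (f 0)); [|simpl; tauto|apply adj_sym; auto].
        apply (ic_cons _ (f 5)); [|simpl; tauto|apply Hc; lia].
        apply (ic_cons _ (f 0)); [|simpl; tauto|auto].
        apply (ic_cons _ (f 1)); [|simpl; tauto|apply adj_sym, Hc; lia].
        apply (ic_cons _ (f 0)); [|simpl; tauto|apply adj_sym, Hc; lia].
        apply ic_single.
      * apply (ic_cons _ w); [|simpl; auto|apply adj_sym; auto].
        apply (ic_cons _ (f 0)); [|simpl; tauto|apply adj_sym; auto].
        apply (ic_cons _ (f 5)); [|simpl; tauto|apply Hc; lia].
        apply (ic_cons _ (f 0)); [|simpl; tauto|auto].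
        apply (ic_cons _ (f 1)); [|simpl; tauto|apply adj_sym, Hc; lia].
        apply (ic_cons _ (f 0)); [|simpl; tauto|apply adj_sym, Hc; lia].
        apply ic_single.
      * set (y := g3 (f 3)).
        assert (Hy2 : adj y (f 2)).
        { rewrite <- (Hg3T (f 2)) by (simpl; tauto). apply aut_adj; [auto| apply adj_sym, Hc; lia]. }
        assert (Hy4 : adj y (f 4)).
        { rewrite <- (Hg3T (f 4)) by (simpl; tauto). apply aut_adj; [auto| apply Hc; lia]. }
        destruct (classic (y = f 3)) as [Ey|Ny].
        -- assert (Hz3 : adj z (f 3)).
           { rewrite <- Hg3u, <- Ey. apply aut_adj; auto. }
           apply (H4 w u (f 3) z); sm0 Hc' Hc Hoff Hne.
        -- apply (H4 (f 3) (f 2) y (f 4)); sm0 Hc' Hc Hoff Hne.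
    +
      assert (Hfu1 : f (n-1) <> u).
      { intros E; rewrite <- E in Hu2. apply adj_sym in Hu2. destruct (ind (n-3) (n-1)); auto; lia. }
      assert (Hfu0 : f 0 <> u).
      { intros E; rewrite <- E in Hu2. destruct (ind 0 (n-3)); auto; lia. }
      apply (Hmin 6 ltac:(lia) (fun t => nth t [f (n-2); f (n-1); f 0; w; u; f (n-3)] (f (n-2)))).
      apply cyc6; try sm0 Hc' Hc Hoff Hne.
      all: try (apply adj_neq; sm0 Hc' Hc Hoff Hne).
      all: try (apply not_eq_sym, adj_neq; sm0 Hc' Hc Hoff Hne).
      all: idtac.
Qed.

End Main.

Theorem lemma4p4 (V : Type) (adj : V -> V -> Prop) (side : V -> bool) :
  simple_graph adj ->
  bipartite_wrt adj side ->
  connected adj ->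
  connected_homogeneous_bip adj side ->
  locally_finite adj ->
  ~ is_tree adj ->
  has_vertex_deg_gt2 adj ->
  embeds_induced_C4 adj.
Proof.
  intros Hsg Hbip Hconn Hch _ Hnt Hdeg.
  destruct (classic (embeds_induced_C4 adj)) as [|HnC4]; auto. exfalso.
  assert (H4 : forall a b c d, adj a b -> adj b c -> adj c d -> adj d a -> a <> c -> b <> d -> False).
  { intros a b c d Hab Hbc Hcd Hda Hac Hbd. apply HnC4.
    exists a, b, c, d. repeat split; auto.
    - apply (adj_neq _ _ Hsg); auto.
    - apply not_eq_sym, (adj_neq _ _ Hsg); auto.
    - apply (adj_neq _ _ Hsg); auto.
    - apply (adj_neq _ _ Hsg); auto.
    - apply (same_side_nadj _ _ _ Hbip).
      rewrite (adj_side _ _ _ Hbip _ _ Hbc), (adj_side _ _ _ Hbip _ _ Hab). destruct (side a); auto.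
    - apply (same_side_nadj _ _ _ Hbip).
      rewrite (adj_side _ _ _ Hbip _ _ Hcd), (adj_side _ _ _ Hbip _ _ Hbc). destruct (side b); auto. }
  assert (Hex : exists l, is_cycle adj l).
  { apply NNPP; intros H; apply Hnt; split; auto. }
  destruct Hex as [l Hl].
  destruct (cycle_to_cyc _ _ l Hl) as [f0 [n0 Hc0]].
  destruct (min_nat (fun n => exists f, cyc _ adj f n) n0 (ex_intro _ f0 Hc0)) as [n [[f Hf] Hmin]].
  assert (Hmin' : forall k, k < n -> forall g, ~ cyc _ adj g k) by (intros k Hk g Hg; apply (Hmin k Hk); eauto).
  destruct Hdeg as (p & a & b & c & Ha & Hb & Hc & Hab & Hac & Hbc).
  assert (Hp : deg3 _ adj p) by (exists a, b, c; repeat split; auto).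
  destruct (Bool.bool_dec (side (f 0)) (side p)) as [E|N].
  - apply (main_arg _ _ _ Hsg Hbip Hch H4 f n Hf Hmin').
    apply (deg3_move _ _ _ Hsg Hch p); auto.
  - pose proof (cyc_rot _ _ f n Hf) as Hr.
    apply (main_arg _ _ _ Hsg Hbip Hch H4 _ n Hr Hmin').
    apply (deg3_move _ _ _ Hsg Hch p); auto.
    destruct Hf as [H3 [_ [Hc' _]]].
    destruct (Nat.ltb_spec 0 (n-1)); [|lia].
    rewrite (adj_side _ _ _ Hbip _ _ (Hc' 0 ltac:(lia))).
    destruct (side (f 0)), (side p); simpl in *; congruence.
Qed.
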